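(* Let $d>r\ge1$, $w=(w_1,\dots,w_r)$ a generalized partition of length $r$, and $u$ a partition with $u_1\le d-r$ and length at most $r$, such that $\mathcal D(\chi(u))\subset\mathcal D(w)$ (so $w/\chi(u)$ is a skew partition) and $(w,\tilde u)$ is admissible. Let $\Sigma=\mathcal D(w/\chi(u))$ and $$\Sigma_\pm=\{(i,j)\in\Sigma:\ \tilde u_{1-j}-(r+1-j)\gtrless w_i-i\},$$ with the convention $\tilde u_k=+\infty$ for $k\le0$ (so $\Sigma=\Sigma_+\cup\Sigma_-$). Define $s_+,s_-$ by $(s_+)_i=w_i+\operatorname{card}\{j\in\{1,..,d-r\}: w_i-i<\tilde u_j-(r+j)\}$ and $(s_-)_j=\tilde u_j-\operatorname{card}\{i\in\{1,..,r\}: w_i-i<\tilde u_j-(r+j)\}$. Then (i) $s_+=[\Sigma_+]$; (ii) $s_-=\langle\chi^*(\Sigma_-)\rangle$; (iii) $i(w,\tilde u)=|u|-\operatorname{card}(\Sigma_-)$.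
   Context: A generalized partition of length $r$ is a weakly decreasing sequence of $r$ integers, with diagram $\mathcal D(u)=\{(i,j)\in\{1,..,r\}\times\mathbb Z: j\le u_i\}$; $\mathcal D(w/u)=\mathcal D(w)\setminus\mathcal D(u)$. For a partition $u=(u_1,\dots,u_r)$ (padded with zeros to length $r$), $\chi(u)=(-u_r,\dots,-u_1)$, and $\chi^*(i,j)=(r+1-i,1-j)$. $\tilde u$ is the transpose of $u$, regarded as $(\tilde u_1,\dots,\tilde u_{d-r})$. For a finite set $S$ of pairs, $[S]_i=\operatorname{card}\{j:(i,j)\in S\}$ and $\langle S\rangle_j=\operatorname{card}\{i:(i,j)\in S\}$. For $a=(w,\tilde u)\in\mathbb Z^d$ and $I(d)=(1,\dots,d)$: $a$ is admissible iff the entries of $a-I(d)$ are pairwise distinct, and $i(a)=\operatorname{card}\{(i,j):i<j,\ (a-I(d))_i<(a-I(d))_j\}$; $i(w,\tilde u)=i(a)$. $|u|=\sum u_i$. *)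

(* Defs.v *)
(* Indices are 1-based: w, u are functions on nat,
   only their values at 1..r matter. *)
From mathcomp Require Import all_boot all_order all_algebra.
Set Implicit Arguments. Unset Strict Implicit. Unset Printing Implicit Defensive.
Import Order.TTheory GRing.Theory Num.Theory.
Local Open Scope ring_scope.

Definition gen_partition (r : nat) (w : nat -> int) : Prop :=
  forall i : nat, (1 <= i)%N -> (i < r)%N -> w i.+1 <= w i.

(* partition of length at most r, given by its parts u_1 >= ... >= u_r >= 0
   (padded with zeros) *)
Definition partition_r (r : nat) (u : nat -> nat) : Prop :=
  forall i : nat, (1 <= i)%N -> (i < r)%N -> (u i.+1 <= u i)%N.

Definition chi (r : nat) (u : nat -> nat) (i : nat) : int := - (u (r.+1 - i)%N)%:Z.

(* transpose: utilde_j = card {i in 1..r : u_i >= j} *)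
Definition utilde (r : nat) (u : nat -> nat) (j : nat) : nat :=
  count (fun i => (j <= u i)%N) (iota 1 r).

Definition diagram_sub (r : nat) (v w : nat -> int) : Prop :=
  forall i : nat, (1 <= i)%N -> (i <= r)%N -> v i <= w i.

Definition int_range (a b : int) : seq int :=
  [seq a + 1 + (t%:Z) | t <- iota 0 `|b - a|%N ].

Definition Sigma (r : nat) (w : nat -> int) (u : nat -> nat) : seq (int * int) :=
  [seq ((i%:Z), j) | i <- iota 1 r,
                     j <- (if chi r u i <= w i then int_range (chi r u i) (w i) else [::])].

(* Sigma_+ : utilde_{1-j} - (r+1-j) > w_i - i, with utilde_k = +oo for k <= 0 *)
Definition in_Sigma_plus (r : nat) (w : nat -> int) (u : nat -> nat) (p : int * int) : bool :=
  let: (i, j) := p in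
  if 1 - j <= 0 then true
  else (utilde r u `|1 - j|%N)%:Z - ((r%:Z) + 1 - j) > w `|i|%N - i.

Definition in_Sigma_minus (r : nat) (w : nat -> int) (u : nat -> nat) (p : int * int) : bool :=
  let: (i, j) := p in
  if 1 - j <= 0 then false
  else (utilde r u `|1 - j|%N)%:Z - ((r%:Z) + 1 - j) < w `|i|%N - i.

Definition Sigma_plus r w u := [seq p <- Sigma r w u | in_Sigma_plus r w u p].
Definition Sigma_minus r w u := [seq p <- Sigma r w u | in_Sigma_minus r w u p].

Definition card_set (S : seq (int * int)) : nat := size (undup S).

Definition row_card (S : seq (int * int)) (i : int) : nat :=
  size (undup [seq p.2 | p <- S & p.1 == i]).
Definition col_card (S : seq (int * int)) (j : int) : nat :=
  size (undup [seq p.1 | p <- S & p.2 == j]).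

Definition chi_star (r : nat) (p : int * int) : int * int :=
  ((r%:Z) + 1 - p.1, 1 - p.2).

Definition wu_vec (r : nat) (w : nat -> int) (u : nat -> nat) (k : nat) : int :=
  if (k <= r)%N then w k else (utilde r u (k - r))%:Z.

Definition a_shift (a : nat -> int) (k : nat) : int := a k - k%:Z.

Definition admissible (d : nat) (a : nat -> int) : bool :=
  uniq [seq a_shift a k | k <- iota 1 d].

Definition inv_index (d : nat) (a : nat -> int) : nat :=
  size [seq p <- [seq (i, j) | i <- iota 1 d, j <- iota 1 d]
          | (p.1 < p.2)%N && (a_shift a p.1 < a_shift a p.2)].

Definition s_plus (d r : nat) (w : nat -> int) (u : nat -> nat) (i : nat) : int :=
  w i + (count (fun j => w i - i%:Z < (utilde r u j)%:Z - (r + j)%N%:Z) (iota 1 (d - r)))%:Z.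

Definition s_minus (d r : nat) (w : nat -> int) (u : nat -> nat) (j : nat) : int :=
  (utilde r u j)%:Z - (count (fun i => w i - i%:Z < (utilde r u j)%:Z - (r + j)%N%:Z) (iota 1 r))%:Z.

Definition part_size (r : nat) (u : nat -> nat) : nat := \sum_(1 <= i < r.+1) u i.

(* Main.v *)
Require Import Defs.
From mathcomp Require Import all_boot all_order all_algebra.
From mathcomp Require Import zify.
Import Order.TTheory GRing.Theory Num.Theory.
Set Implicit Arguments. Unset Strict Implicit. Unset Printing Implicit Defensive.
Local Open Scope ring_scope.
Lemma down_count (P : pred nat) (n : nat) :
  (forall l, (1 <= l)%N -> (l < n)%N -> P l.+1 -> P l) ->
  forall l, (1 <= l)%N -> (l <= n)%N -> P l = (l <= count P (iota 1 n))%N.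
Proof.
elim: n => [|n IH] Hanti l Hl1 Hln; first lia.
have IH' : forall l, (1 <= l)%N -> (l <= n)%N -> P l = (l <= count P (iota 1 n))%N.
  apply: IH => k H1 H2; apply: Hanti; lia.
have Hcs : (count P (iota 1 n) <= n)%N by rewrite -{2}(size_iota 1 n) count_size.
have Hfull : P n.+1 -> count P (iota 1 n) = n.
  move=> Pn; case: n {IH Hln} Hanti IH' Hcs Pn => [|n] Hanti IH' Hcs Pn; first lia.
  have : P n.+1 by apply: Hanti.
  rewrite IH' //; lia.
rewrite -(addn1 n) iotaD count_cat /= addn0.
case: (ltngtP l n.+1) Hln => // [Hlt|->] _.
  rewrite IH'; last lia; last lia.
  case E: (P n.+1) => /=; last by rewrite addn0.
  rewrite Hfull //; lia.
case E: (P n.+1) => /=; first by rewrite Hfull //; lia.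
lia.
Qed.
Lemma anti_nat (f : nat -> nat) (n : nat) :
  (forall i, (1 <= i)%N -> (i < n)%N -> (f i.+1 <= f i)%N) ->
  forall a b, (1 <= a)%N -> (a <= b)%N -> (b <= n)%N -> (f b <= f a)%N.
Proof.
move=> H a b Ha; elim: b => [|b IH] Hab Hbn; first lia.
case: (ltngtP a b.+1) Hab => // [Hlt|->] _; last by [].
apply: leq_trans (IH _ _); [apply: H|..]; lia.
Qed.

Lemma anti_int (f : nat -> int) (n : nat) :
  (forall i, (1 <= i)%N -> (i < n)%N -> f i.+1 <= f i) ->
  forall a b, (1 <= a)%N -> (a <= b)%N -> (b <= n)%N -> f b <= f a.
Proof.
move=> H a b Ha; elim: b => [|b IH] Hab Hbn; first lia.
case: (ltngtP a b.+1) Hab => // [Hlt|->] _; last by [].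
apply: le_trans (IH _ _); [apply: H|..]; lia.
Qed.

Lemma count_ge (a m n : nat) :
  count (fun i => a <= i)%N (iota m n) = ((m + n) - maxn a m)%N.
Proof.
elim: n m => [|n IH] m /=; first lia.
rewrite IH; case: (leqP a m) => H /=; lia.
Qed.

Lemma mem_int_range (a c b : int) : a <= c -> (b \in int_range a c) = (a < b <= c).
Proof.
move=> Hac; rewrite /int_range; apply/mapP/idP.
  by move=> [t Ht ->]; move: Ht; rewrite mem_iota => Ht; lia.
move=> Hb; exists (absz (b - a - 1)%R); first by rewrite mem_iota; lia.
lia.
Qed.

Lemma uniq_int_range (a c : int) : uniq (int_range a c).
Proof.
rewrite /int_range map_inj_uniq ?iota_uniq // => x y /= H; lia.
Qed.

Definition Rrow r w u i := if chi r u i <= w i then int_range (chi r u i) (w i) else [::].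
Definition Xv (w : nat -> int) (i : nat) : int := w i - i%:Z.
Definition Yv r u k : int := (utilde r u k)%:Z - (r + k)%N%:Z.
Definition mm r D w u i := count (fun j => Xv w i < Yv r u j) (iota 1 D).

Lemma SigmaE r w u : Sigma r w u = [seq (i%:Z, j) | i <- iota 1 r, j <- Rrow r w u i].
Proof. by []. Qed.

Lemma memSigmaP r w u i b : (1 <= i <= r)%N ->
  ((i%:Z, b) \in Sigma r w u) = (b \in Rrow r w u i).
Proof.
move=> Hi; rewrite SigmaE; apply/allpairsPdep/idP.
  by move=> [x [y [Hx Hy [-> ->]]]].
by move=> Hb; exists i, b; split => //; rewrite mem_iota; lia.
Qed.

Lemma memSigmaE r w u p : p \in Sigma r w u ->
  exists i, [/\ (1 <= i <= r)%N, p = (i%:Z, p.2) & p.2 \in Rrow r w u i].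
Proof.
rewrite SigmaE => /allpairsPdep [x [y [Hx Hy ->]]]; exists x; split => //.
by move: Hx; rewrite mem_iota; lia.
Qed.

Lemma uniq_Sigma r w u : uniq (Sigma r w u).
Proof.
rewrite SigmaE; apply: allpairs_uniq_dep; first exact: iota_uniq.
  by move=> i _; rewrite /Rrow; case: ifP => // _; apply: uniq_int_range.
move=> [x1 y1] [x2 y2] _ _ /= [E1 E2]; subst x2.
by rewrite E2.
Qed.

Lemma ut_le r u k l : partition_r r u -> (1 <= l <= r)%N ->
  (k <= u l)%N = (l <= utilde r u k)%N.
Proof.
move=> Hu Hl; rewrite /utilde; apply: (@down_count (fun l => k <= u l)%N); try lia.
move=> l' H1 H2 /= H; apply: leq_trans H _; exact: Hu.
Qed.

Lemma ut_size r u k : (utilde r u k <= r)%N.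
Proof. by rewrite /utilde -{2}(size_iota 1 r) count_size. Qed.

Lemma ut_anti r u k k' : (k <= k')%N -> (utilde r u k' <= utilde r u k)%N.
Proof. move=> H; apply: sub_count => l /= H'; exact: leq_trans H H'. Qed.

Lemma YltX r w u i k : partition_r r u -> diagram_sub r (chi r u) w ->
  (1 <= i <= r)%N -> (u (r.+1 - i) < k)%N -> Yv r u k < Xv w i.
Proof.
move=> Hu Hchi Hi Hk.
have Hl : (1 <= r.+1 - i <= r)%N by lia.
have H := ut_le k Hu Hl.
rewrite leqNgt Hk in H.
have Hc : chi r u i <= w i by apply: Hchi; lia.
rewrite /chi in Hc; rewrite /Yv /Xv.
have H' : (utilde r u k < r.+1 - i)%N by move: H; case: leqP.
lia.
Qed.

Lemma XltY r w u i k : partition_r r u ->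
  (1 <= i <= r)%N -> (1 <= k)%N -> (k <= u (r.+1 - i))%N -> w i + k%:Z <= 0 ->
  Xv w i < Yv r u k.
Proof.
move=> Hu Hi Hk1 Hk Hw.
have Hl : (1 <= r.+1 - i <= r)%N by lia.
have H' := ut_le k Hu Hl.
rewrite Hk in H'.
rewrite /Yv /Xv; lia.
Qed.

Lemma Ydown r D w u i : partition_r r u -> forall k, (1 <= k <= D)%N ->
  (Xv w i < Yv r u k) = (k <= mm r D w u i)%N.
Proof.
move=> Hu k Hk; rewrite /mm.
apply: (@down_count (fun k => Xv w i < Yv r u k)); try lia.
move=> l H1 H2 /= H; have := ut_anti r u (leqnSn l); move: H; rewrite /Yv; lia.
Qed.

Lemma m_le_c r D w u i : partition_r r u -> diagram_sub r (chi r u) w ->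
  (1 <= i <= r)%N -> (mm r D w u i <= u (r.+1 - i))%N.
Proof.
move=> Hu Hchi Hi.
case: (ltnP (u (r.+1 - i)%N) D) => HD.
  have H := YltX Hu Hchi Hi (ltnSn (u (r.+1 - i)%N)).
  have H2 : (Xv w i < Yv r u (u (r.+1-i)%N).+1) = false.
    by apply/negbTE; rewrite -leNgt ltW.
  rewrite (@Ydown r D w u i Hu) in H2; last lia.
  move: H2; case: leqP => //; lia.
apply: leq_trans HD; rewrite /mm -{2}(size_iota 1 D); exact: count_size.
Qed.

Lemma m_ge r D w u i : partition_r r u -> diagram_sub r (chi r u) w -> (u 1 <= D)%N ->
  (1 <= i <= r)%N -> - w i <= (mm r D w u i)%:Z.
Proof.
move=> Hu Hchi HD Hi.
have Hc : chi r u i <= w i by apply: Hchi; lia.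
rewrite /chi in Hc.
have Hc1 : (u (r.+1 - i) <= u 1)%N by apply: (anti_nat Hu); lia.
case: (ltP (w i) 0) => Hw; last lia.
have h1 : (1 <= (absz (w i)%R))%N by lia.
have h2 : ((absz (w i)%R) <= u (r.+1 - i))%N by lia.
have h3 : w i + (absz (w i)%R)%:Z <= 0 by lia.
have := XltY Hu Hi h1 h2 h3.
rewrite (@Ydown r D w u i Hu); last lia.
move=> H; lia.
Qed.

Lemma row_plus r D w u i : partition_r r u -> diagram_sub r (chi r u) w -> (u 1 <= D)%N ->
  (1 <= i <= r)%N ->
  (count (fun b => in_Sigma_plus r w u (i%:Z, b)) (Rrow r w u i))%:Z
    = w i + (mm r D w u i)%:Z.
Proof.
move=> Hu Hchi HD Hi.
have Hc : chi r u i <= w i by apply: Hchi; lia.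
have Hc1 : (u (r.+1 - i) <= u 1)%N by apply: (anti_nat Hu); lia.
have Hml := m_le_c D Hu Hchi Hi.
have Hmg := m_ge Hu Hchi HD Hi.
rewrite /Rrow Hc /int_range count_map.
rewrite /chi in Hc *.
set c := u (r.+1 - i)%N in Hc Hc1 Hml *.
set m := mm r D w u i in Hml Hmg *.
rewrite (@eq_in_count _ _ (fun t => c - m <= t)%N).
  rewrite count_ge; lia.
move=> t _ /=; rewrite /in_Sigma_plus.
case: (leqP c t) => Hct.
  rewrite ifT; last lia.
  by symmetry; lia.
rewrite ifF; last lia.
have -> : absz (1 - (- c%:Z + 1 + t%:Z))%R = (c - t)%N by lia.
have -> : (r%:Z + 1 - (- c%:Z + 1 + t%:Z)) = (r + (c - t))%N%:Z by lia.
change ((Xv w i < Yv r u (c - t)) = (c - m <= t)%N).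
rewrite (@Ydown r D w u i Hu); last lia.
by apply/idP/idP; lia.
Qed.

Lemma row_minus r D w u i : partition_r r u -> diagram_sub r (chi r u) w -> (u 1 <= D)%N ->
  (forall i k, (1 <= i <= r)%N -> (1 <= k <= D)%N -> Xv w i != Yv r u k) ->
  (1 <= i <= r)%N ->
  count (fun b => in_Sigma_minus r w u (i%:Z, b)) (Rrow r w u i)
    = (u (r.+1 - i) - mm r D w u i)%N.
Proof.
move=> Hu Hchi HD Hadm Hi.
have Hc : chi r u i <= w i by apply: Hchi; lia.
have Hc1 : (u (r.+1 - i) <= u 1)%N by apply: (anti_nat Hu); lia.
have Hml := m_le_c D Hu Hchi Hi.
have Hmg := m_ge Hu Hchi HD Hi.
have Hp := row_plus Hu Hchi HD Hi.
rewrite (@eq_in_count _ _ (predC (fun b => in_Sigma_plus r w u (i%:Z, b)))).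
  have := count_predC (fun b => in_Sigma_plus r w u (i%:Z, b)) (Rrow r w u i).
  have Hs : size (Rrow r w u i) = absz (w i - chi r u i)%R.
    by rewrite /Rrow Hc /int_range size_map size_iota.
  rewrite Hs; move: Hp; rewrite /chi in Hc *. intros. set A := count (fun b : int => in_Sigma_plus r w u (i%:Z, b)) (Rrow r w u i) in Hp H *. set B := count (predC _) _ in H *. lia.
move=> b; rewrite /Rrow Hc mem_int_range // => Hb /=.
rewrite /in_Sigma_minus /in_Sigma_plus.
case: ifP => H1 //.
rewrite /chi in Hb.
have -> : (r%:Z + 1 - b) = (r + absz (1 - b)%R)%N%:Z by lia.
change ((Yv r u (absz (1 - b)%R) < Xv w i) = ~~ (Xv w i < Yv r u (absz (1 - b)%R))).
have Hk : (1 <= absz (1 - b)%R <= D)%N by lia.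
have := Hadm i _ Hi Hk.
move=> Hne; apply/idP/idP; lia.
Qed.

Lemma uniq_Rrow r w u i : uniq (Rrow r w u i).
Proof. by rewrite /Rrow; case: ifP => // _; apply: uniq_int_range. Qed.

Lemma wu_X r w u i : (i <= r)%N -> a_shift (wu_vec r w u) i = Xv w i.
Proof. by move=> H; rewrite /a_shift /wu_vec H. Qed.

Lemma wu_Y r w u p : (r < p)%N ->
  a_shift (wu_vec r w u) p = (utilde r u (p - r))%:Z - p%:Z.
Proof. by move=> H; rewrite /a_shift /wu_vec leqNgt H. Qed.

Lemma col_count r D w u j : partition_r r u -> diagram_sub r (chi r u) w -> (u 1 <= D)%N ->
  (forall i k, (1 <= i <= r)%N -> (1 <= k <= D)%N -> Xv w i != Yv r u k) ->
  (1 <= j <= D)%N ->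
  (count (fun i : nat => in_Sigma_minus r w u (i%:Z, 1 - j%:Z) && ((1 - j%:Z) \in Rrow r w u i))
     (iota 1 r))%:Z
  = (utilde r u j)%:Z - (count (fun i => Xv w i < Yv r u j) (iota 1 r))%:Z.
Proof.
move=> Hu Hchi HD Hadm Hj.
set A := fun i => (r.+1 - utilde r u j <= i)%N.
set B := fun i => Xv w i < Yv r u j.
have Hut := ut_size r u j.
rewrite (@eq_in_count _ _ (predI (predC B) A)).
  have := count_predC B (filter A (iota 1 r)).
  rewrite !count_filter size_filter.
  have -> : count (predI B A) (iota 1 r) = count B (iota 1 r).
    apply: eq_in_count => i; rewrite mem_iota => Hi /=.
    case HA: (A i); first by rewrite andbT.
    rewrite andbF; symmetry; apply/negbTE; rewrite /B -leNgt ltW //.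
    have Hi2 : (1 <= i <= r)%N by lia.
    apply: (YltX Hu Hchi Hi2).
    have Hl : (1 <= r.+1 - i <= r)%N by lia.
    rewrite ltnNge (ut_le j Hu Hl); move: HA; rewrite /A; lia.
  have -> : count A (iota 1 r) = utilde r u j.
    by rewrite /A count_ge; lia.
  by move=> <-; rewrite PoszD addrC addKr.
move=> i; rewrite mem_iota => Hi /=.
have Hc : chi r u i <= w i by apply: Hchi; lia.
rewrite /Rrow Hc mem_int_range // /in_Sigma_minus.
rewrite ifF; last lia.
have -> : absz (1 - (1 - j%:Z))%R = j by lia.
have -> : (r%:Z + 1 - (1 - j%:Z)) = (r + j)%N%:Z by lia.
change ((Yv r u j < Xv w i) && (chi r u i < 1 - j%:Z <= w i) = ~~ B i && A i).
have Hl : (1 <= r.+1 - i <= r)%N by lia.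
have Hul := ut_le j Hu Hl.
have h1 : (j <= u (r.+1 - i))%N -> (r.+1 - i <= utilde r u j)%N by rewrite Hul.
have h2 : (r.+1 - i <= utilde r u j)%N -> (j <= u (r.+1 - i))%N by rewrite Hul.
have Hne := Hadm i j Hi Hj.
rewrite /B /A /chi; move: Hne h1 h2; rewrite /Xv /Yv /chi in Hc *.
move=> Hne h1 h2; apply/idP/idP; lia.
Qed.
Unset Implicit Arguments. Set Strict Implicit.

Theorem lemma5p7 (d r : nat) (w : nat -> int) (u : nat -> nat) :
  (1 <= r)%N -> (r < d)%N ->
  gen_partition r w ->
  partition_r r u ->
  (u 1 <= d - r)%N ->
  diagram_sub r (chi r u) w ->
  admissible d (wu_vec r w u) ->
  [/\ (forall i : nat, (1 <= i <= r)%N ->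
         s_plus d r w u i = (row_card (Sigma_plus r w u) i%:Z)%:Z),
      (forall j : nat, (1 <= j <= d - r)%N ->
         s_minus d r w u j
           = (col_card [seq chi_star r p | p <- Sigma_minus r w u] j%:Z)%:Z)
    & (inv_index d (wu_vec r w u))%:Z
        = (part_size r u)%:Z - (card_set (Sigma_minus r w u))%:Z].
Proof.
move=> Hr Hrd Hw Hu Hu1 Hchi Hadm0.
have Ed : d = (r + (d - r))%N by lia.
have Hiota : iota 1 d = iota 1 r ++ iota (r + 1) (d - r).
  by rewrite {1}Ed iotaD addnC.
have Hadm : forall i k, (1 <= i <= r)%N -> (1 <= k <= d - r)%N -> Xv w i != Yv r u k.
  move=> i k Hi Hk; move: Hadm0; rewrite /admissible Hiota map_cat cat_uniq.
  case/and3P => _ /hasPn Hdis _.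
  apply/eqP => E.
  have Hin : a_shift (wu_vec r w u) (r + k) \in [seq a_shift (wu_vec r w u) k | k <- iota (r + 1) (d - r)].
    by apply: map_f; rewrite mem_iota; lia.
  move: (Hdis _ Hin); rewrite wu_Y; last lia.
  rewrite addKn -/(Yv r u k) -E; case/negP.
  rewrite -(@wu_X r w u i); last lia.
  by apply: map_f; rewrite mem_iota; lia.
split.
- move=> i Hi.
  rewrite /s_plus.
  have -> : count (fun j => w i - i%:Z < (utilde r u j)%:Z - (r + j)%N%:Z) (iota 1 (d - r))
     = mm r (d - r) w u i by [].
  rewrite -(row_plus Hu Hchi Hu1 Hi); congr Posz.
  rewrite /row_card -size_filter; symmetry; apply: perm_size; apply: uniq_perm.
  + exact: undup_uniq.
  + exact: filter_uniq (uniq_Rrow r w u i).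
  move=> b; rewrite mem_undup mem_filter; apply/mapP/idP.
    move=> [[a b'] Hp ->] /=; move: Hp; rewrite mem_filter /= => /andP [/eqP -> ].
    by rewrite /Sigma_plus mem_filter memSigmaP.
  move=> /andP [Hpl Hb]; exists (i%:Z, b) => //.
  by rewrite mem_filter /= eqxx /Sigma_plus mem_filter Hpl memSigmaP.
- move=> j Hj.
  rewrite /s_minus /col_card.
  have -> : count (fun i => w i - i%:Z < (utilde r u j)%:Z - (r + j)%N%:Z) (iota 1 r)
     = count (fun i => Xv w i < Yv r u j) (iota 1 r) by [].
  rewrite -(col_count Hu Hchi Hu1 Hadm Hj); congr Posz.
  rewrite -size_filter -(size_map (fun i : nat => r%:Z + 1 - i%:Z)).
  symmetry; apply: perm_size; apply: uniq_perm.
  + exact: undup_uniq.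
  + rewrite map_inj_in_uniq ?filter_uniq ?iota_uniq // => x y _ _ /= E; lia.
  move=> a; rewrite mem_undup; apply/mapP/mapP.
    move=> [q]; rewrite mem_filter => /andP [/eqP E2 /mapP [[a0 b] Hp Eq]] ->.
    move: Hp; rewrite /Sigma_minus mem_filter => /andP [Hm HS].
    have [i [Hi Ep Hb]] := memSigmaE HS.
    case: Ep => Ea; subst a0 q.
    move: Hm Hb E2 => /= Hm Hb E2.
    exists i => //.
    have Eb : b = 1 - j%:Z by lia.
    by rewrite mem_filter mem_iota Hi andbT -Eb Hm Hb.
  move=> [i]; rewrite mem_filter mem_iota => /andP [/andP [Hm Hb] Hi] ->.
  exists (chi_star r (i%:Z, 1 - j%:Z)) => //.
  rewrite mem_filter /=; apply/andP; split; first by apply/eqP; lia.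
  apply: map_f; rewrite /Sigma_minus mem_filter Hm /= memSigmaP //; lia.
have Hcard : card_set (Sigma_minus r w u)
    = (\sum_(i <- iota 1 r) (u (r.+1 - i) - mm r (d - r) w u i))%N.
  rewrite /card_set undup_id; last exact: filter_uniq (uniq_Sigma r w u).
  rewrite /Sigma_minus size_filter SigmaE count_flatten sumnE big_map.
  rewrite big_map; apply: eq_big_seq => i; rewrite mem_iota => Hi.
  rewrite count_map; exact: (row_minus Hu Hchi Hu1 Hadm Hi).
have Hpart : part_size r u = (\sum_(i <- iota 1 r) u (r.+1 - i))%N.
  rewrite /part_size big_nat_rev /index_iota subSS subn0.
  by apply: eq_big_seq => i _; congr u; lia.
have Hinv : inv_index d (wu_vec r w u) = (\sum_(i <- iota 1 r) mm r (d - r) w u i)%N.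
  rewrite /inv_index size_filter count_flatten sumnE !big_map Hiota big_cat /=.
  rewrite [X in (_ + X)%N]big1_seq ?addn0.
    apply: eq_big_seq => p; rewrite mem_iota => Hp.
    rewrite count_map count_cat.
    have -> : count (preim (pair p) (fun q => (q.1 < q.2)%N && (a_shift (wu_vec r w u) q.1 < a_shift (wu_vec r w u) q.2))) (iota 1 r) = 0%N.
      apply/eqP; rewrite eqn0Ngt -has_count; apply/hasPn => q; rewrite mem_iota => Hq /=.
      rewrite !wu_X; try lia.
      apply/negP => /andP [Hpq]; rewrite /Xv.
      have := anti_int Hw (_ : (1 <= p)%N) (ltnW Hpq) (_ : (q <= r)%N).
      lia.
    rewrite add0n iotaDl count_map /mm.
    apply: eq_in_count => k; rewrite mem_iota => Hk /=.
    rewrite wu_X; last lia.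
    rewrite wu_Y; last lia.
    rewrite addKn.
    have -> : (p < r + k)%N by lia.
    by [].
  move=> p; rewrite mem_iota => Hp.
  rewrite count_map -Hiota; apply/eqP; rewrite eqn0Ngt -has_count; apply/hasPn => q; rewrite mem_iota => Hq /=.
  apply/negP => /andP [Hpq].
  rewrite !wu_Y; try lia.
  have := ut_anti r u (_ : (p - r <= q - r)%N).
  lia.
have Hsplit : (\sum_(i <- iota 1 r) u (r.+1 - i)
   = \sum_(i <- iota 1 r) (u (r.+1 - i) - mm r (d - r) w u i)
     + \sum_(i <- iota 1 r) mm r (d - r) w u i)%N.
  rewrite -big_split; apply: eq_big_seq => i; rewrite mem_iota => Hi /=.
  by rewrite subnK // (m_le_c (d - r) Hu Hchi Hi).
rewrite Hinv Hpart Hcard Hsplit; lia.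
Qed.
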